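(* Let $n\ge 2$ be even. Consider the generalized $n$-gene repressilator system $$\dot r_i = a_i(p_{i-1}) - d_{r_i}(r_i),\qquad \dot p_i = k_i(r_i) - d_{p_i}(p_i),\qquad i=1,\dots,n,$$ (indices mod $n$), with functions satisfying the standing assumptions in the context. Assume $\alpha_i:=\lim_{x\to\infty}a_i(x)>0$ for all $i$, and that for all $i$, $\delta_i^R > a_i(0)$ and $\delta_i^P > k_i(d_{r_i}^{-1}(a_i(0)))$, where $\delta_i^R:=\lim_{x\to\infty} d_{r_i}(x)$ and $\delta_i^P:=\lim_{x\to\infty} d_{p_i}(x)$ (possibly $+\infty$). Then the central steady state $E_C$ exists and is a steady state: for each $i$ the fixed-point equation $p_i = f_i\circ f_{i-1}\circ\cdots\circ f_1\circ f_n\circ\cdots\circ f_{i+1}(p_i)$ has a positive solution, and there are such solutions $p_1^*,\dots,p_n^*>0$ for which $$E_C=\big(d_{r_1}^{-1}(a_1(p_n^* )),\dots,d_{r_n}^{-1}(a_n(p_{n-1}^* )),\,p_1^*,\dots,p_n^*\big)$$ is a steady state.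
   Context: Standing assumptions: each $a_i:[0,\infty)\to\mathbb{R}$ is $C^1$, nonnegative, strictly decreasing, with $a_i(0)>0$. Each $d_{r_i}, d_{p_i}, k_i:[0,\infty)\to\mathbb{R}$ is $C^1$, vanishes at $0$, and is strictly increasing on $(0,\infty)$. Define $f_i := d_{p_i}^{-1}\circ k_i\circ d_{r_i}^{-1}\circ a_i$. *)

(* Defs.v *)
From Stdlib Require Import Reals Lra Lia Arith ClassicalEpsilon.
From Coquelicot Require Import Coquelicot.
Open Scope R_scope.

(* f is C^1 on [0,oo): f agrees on [0,oo) with a C^1 function on R
   (equivalent to C^1 on [0,oo) with a one-sided derivative at 0). *)
Definition C1_nonneg (f : R -> R) : Prop :=
  exists g : R -> R,
    (forall x, ex_derive g x) /\ (forall x, continuous (Derive g) x) /\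
    (forall x, 0 <= x -> f x = g x).

Definition strict_decr_nonneg (f : R -> R) : Prop :=
  forall x y, 0 <= x -> x < y -> f y < f x.

Definition strict_incr_pos (f : R -> R) : Prop :=
  forall x y, 0 < x -> x < y -> f x < f y.

(* Inverse of g viewed as a map on [0,oo): some x >= 0 with g x = y
   (unique when g is injective on [0,oo)); arbitrary if none exists. *)
Definition inv_nonneg (g : R -> R) (y : R) : R :=
  epsilon (inhabits 0) (fun x => 0 <= x /\ g x = y).

(* Indices are 0-based: i = 0..n-1; predecessor mod n. *)
Definition prev (n i : nat) : nat := ((i + n - 1) mod n)%nat.

Definition fmap (a dr dp k : nat -> R -> R) (i : nat) (x : R) : R :=
  inv_nonneg (dp i) (k i (inv_nonneg (dr i) (a i x))).

Fixpoint comp_from (F : nat -> R -> R) (n start m : nat) (x : R) : R :=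
  match m with
  | O => x
  | S m' => comp_from F n (S start) m' (F (start mod n)%nat x)
  end.

(* f_i o f_{i-1} o ... o f_1 o f_n o ... o f_{i+1}  (first f_{i+1}, last f_i) *)
Definition cyc_map (F : nat -> R -> R) (n i : nat) (x : R) : R :=
  comp_from F n (S i) n x.

Definition standing (n : nat) (a dr dp k : nat -> R -> R) : Prop :=
  forall i, (i < n)%nat ->
    (C1_nonneg (a i) /\ (forall x, 0 <= x -> 0 <= a i x) /\
       strict_decr_nonneg (a i) /\ 0 < a i 0) /\
    (C1_nonneg (dr i) /\ dr i 0 = 0 /\ strict_incr_pos (dr i)) /\
    (C1_nonneg (dp i) /\ dp i 0 = 0 /\ strict_incr_pos (dp i)) /\
    (C1_nonneg (k i) /\ k i 0 = 0 /\ strict_incr_pos (k i)).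

Definition steady_state (n : nat) (a dr dp k : nat -> R -> R)
    (r p : nat -> R) : Prop :=
  forall i, (i < n)%nat ->
    a i (p (prev n i)) - dr i (r i) = 0 /\ k i (r i) - dp i (p i) = 0.

(* Main.v *)
Require Import Defs.
From Stdlib Require Import Reals Arith Lra Lia ClassicalEpsilon.
From Coquelicot Require Import Coquelicot.
Open Scope R_scope.

Lemma C1_cont h : C1_nonneg h -> exists g, continuity g /\ forall x, 0 <= x -> h x = g x.
Proof.
  intros [g [Hd [_ He]]]. exists g. split; auto.
  intro x. apply continuity_pt_filterlim. apply (ex_derive_continuous (K:=R_AbsRing) (V:=R_NormedModule)). auto.
Qed.

Lemma incr0 h : C1_nonneg h -> h 0 = 0 -> strict_incr_pos h ->
  forall x y, 0 <= x -> x < y -> h x < h y.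
Proof.
  intros HC H0 Hi x y Hx Hxy.
  destruct (Rle_lt_or_eq_dec 0 x Hx) as [Hx'|Hx']; [apply Hi; lra|].
  subst x. rewrite H0.
  destruct (Rlt_or_le 0 (h y)) as [|Hy]; auto. exfalso.
  destruct (C1_cont h HC) as [g [Hg He]].
  assert (Hz : h (y/2) < h y) by (apply Hi; lra).
  set (e := - h (y/2)).
  assert (He0 : 0 < e) by (unfold e; lra).
  destruct (Hg 0 e He0) as [d [Hd Hdd]].
  set (w := Rmin (d/2) (y/4)).
  assert (Hw : 0 < w) by (unfold w; apply Rmin_glb_lt; lra).
  assert (Hw2 : w <= y/4) by apply Rmin_r.
  assert (Hw3 : w <= d/2) by apply Rmin_l.
  assert (Hhw : h w < h (y/2)) by (apply Hi; lra).
  specialize (Hdd w). simpl in Hdd. unfold R_dist in Hdd.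
  rewrite <- He in Hdd by lra. rewrite <- He, H0 in Hdd by lra.
  assert (Habs : Rabs (h w - 0) < e).
  { apply Hdd. split. { unfold D_x, no_cond. split; auto. lra. }
    rewrite Rminus_0_r, Rabs_pos_eq; lra. }
  rewrite Rminus_0_r in Habs. pose proof (Rle_abs (- h w)). rewrite Rabs_Ropp in H. unfold e in *. lra.
Qed.

Lemma exists_pre h : C1_nonneg h -> h 0 = 0 -> strict_incr_pos h ->
  forall u b, 0 <= u -> 0 <= b -> u <= h b -> exists y, 0 <= y /\ h y = u.
Proof.
  intros HC H0 Hi u b Hu Hb Hub.
  destruct (C1_cont h HC) as [g [Hg He]].
  destruct (IVT_gen g 0 b u Hg) as [x [Hx1 Hx2]].
  { rewrite <- !He by lra. rewrite H0. rewrite Rmin_left, Rmax_right; lra. }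
  rewrite Rmin_left, Rmax_right in Hx1 by lra.
  exists x. split; [lra|]. rewrite He; lra.
Qed.

Lemma inv_spec h u : (exists y, 0 <= y /\ h y = u) ->
  0 <= inv_nonneg h u /\ h (inv_nonneg h u) = u.
Proof. intro H. unfold inv_nonneg. apply epsilon_spec; exact H. Qed.

Lemma lim_above f (l : Rbar) (u : R) : is_lim f p_infty l -> Rbar_lt u l ->
  exists b, 0 <= b /\ u <= f b.
Proof.
  intros Hl Hu.
  pose proof (Hl _ (open_Rbar_gt' _ _ Hu)) as H.
  destruct H as [M HM]. exists (Rmax 1 (M+1)).
  split. { pose proof (Rmax_l 1 (M+1)). lra. }
  pose proof (HM (Rmax 1 (M+1))) as H. simpl in H. left; apply H.
  pose proof (Rmax_r 1 (M+1)). lra.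
Qed.
Definition incr_ok (h : R -> R) := C1_nonneg h /\ h 0 = 0 /\ strict_incr_pos h.

Lemma incr_le h : incr_ok h -> forall x y, 0 <= x -> x <= y -> h x <= h y.
Proof.
  intros [HC [H0 Hi]] x y Hx Hxy. destruct (Req_dec x y) as [->|]; [lra|].
  left; apply (incr0 h HC H0 Hi); lra.
Qed.

Lemma inv_mono h u1 u2 : incr_ok h -> (exists y, 0 <= y /\ h y = u1) ->
  (exists y, 0 <= y /\ h y = u2) -> u1 <= u2 -> inv_nonneg h u1 <= inv_nonneg h u2.
Proof.
  intros Hh E1 E2 Hu. destruct (inv_spec h u1 E1) as [A1 B1].
  destruct (inv_spec h u2 E2) as [A2 B2].
  destruct (Rle_or_lt (inv_nonneg h u1) (inv_nonneg h u2)) as [|Hlt]; auto.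
  destruct Hh as [HC [H0 Hi]].
  pose proof (incr0 h HC H0 Hi _ _ A2 Hlt). lra.
Qed.

Lemma F_props (A Dr Dp K : R -> R) :
  (forall x, 0 <= x -> 0 <= A x) -> strict_decr_nonneg A ->
  incr_ok Dr -> incr_ok Dp -> incr_ok K ->
  (exists b, 0 <= b /\ A 0 <= Dr b) ->
  (exists b, 0 <= b /\ K (inv_nonneg Dr (A 0)) <= Dp b) ->
  (forall x, 0 <= x -> exists y, 0 <= y /\ Dr y = A x) /\
  (forall x, 0 <= x -> exists y, 0 <= y /\ Dp y = K (inv_nonneg Dr (A x))) /\
  (forall x, 0 <= x -> 0 < inv_nonneg Dp (K (inv_nonneg Dr (A x)))) /\
  (forall x y, 0 <= x -> x <= y ->
     inv_nonneg Dp (K (inv_nonneg Dr (A y))) <= inv_nonneg Dp (K (inv_nonneg Dr (A x)))).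
Proof.
  intros Ann Ad HDr HDp HK [b1 [Hb1 HB1]] [b2 [Hb2 HB2]].
  assert (Ale : forall x y, 0 <= x -> x <= y -> A y <= A x).
  { intros x y Hx Hxy. destruct (Req_dec x y) as [->|]; [lra|]. left; apply Ad; lra. }
  assert (Apos : forall x, 0 <= x -> 0 < A x).
  { intros x Hx. pose proof (Ad x (x+1) Hx ltac:(lra)). pose proof (Ann (x+1) ltac:(lra)). lra. }
  destruct HDr as [DrC [Dr0 Dri]] eqn:EDr. destruct HDp as [DpC [Dp0 Dpi]] eqn:EDp.
  destruct HK as [KC [K0 Ki]] eqn:EK.
  assert (Er : forall x, 0 <= x -> exists y, 0 <= y /\ Dr y = A x).
  { intros x Hx. pose proof (Ale 0 x ltac:(lra) Hx). pose proof (Ann x Hx).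
    apply (exists_pre Dr DrC Dr0 Dri (A x) b1); lra. }
  assert (rmono : forall x y, 0 <= x -> x <= y ->
     inv_nonneg Dr (A y) <= inv_nonneg Dr (A x)).
  { intros x y Hx Hxy. apply inv_mono; [exact HDr | apply Er; lra | apply Er; lra | apply Ale; auto]. }
  assert (Ep : forall x, 0 <= x -> exists y, 0 <= y /\ Dp y = K (inv_nonneg Dr (A x))).
  { intros x Hx. destruct (inv_spec _ _ (Er x Hx)) as [r0 r1].
    assert (0 <= K (inv_nonneg Dr (A x))).
    { rewrite <- K0. apply incr_le; auto; lra. }
    assert (K (inv_nonneg Dr (A x)) <= K (inv_nonneg Dr (A 0))).
    { apply incr_le; auto. apply rmono; lra. }
    apply (exists_pre Dp DpC Dp0 Dpi _ b2); lra. }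
  split; [exact Er|]. split; [exact Ep|]. split.
  - intros x Hx. destruct (inv_spec _ _ (Er x Hx)) as [r0 r1].
    destruct (inv_spec _ _ (Ep x Hx)) as [p0 p1].
    pose proof (Apos x Hx).
    destruct (Rle_lt_or_eq_dec _ _ r0) as [rp|rz]; [|rewrite <- rz, Dr0 in r1; lra].
    pose proof (incr0 K KC K0 Ki 0 _ ltac:(lra) rp).
    destruct (Rle_lt_or_eq_dec _ _ p0) as [pp|pz]; auto. rewrite <- pz, Dp0 in p1; lra.
  - intros x y Hx Hxy. apply inv_mono; [exact HDp | apply Ep; lra | apply Ep; lra |].
    apply incr_le; [exact HK | apply (inv_spec _ _ (Er y ltac:(lra))) | apply rmono; auto].
Qed.

Section Comb.
Variable F : nat -> R -> R.
Variable n : nat.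
Hypothesis npos : (0 < n)%nat.
Hypothesis Fpos : forall i, (i < n)%nat -> forall x, 0 <= x -> 0 < F i x.
Hypothesis Fanti : forall i, (i < n)%nat -> forall x y, 0 <= x -> x <= y -> F i y <= F i x.

Lemma modlt s : (s mod n < n)%nat.
Proof. apply Nat.mod_upper_bound; lia. Qed.

Lemma comp_last m : forall s x,
  comp_from F n s (S m) x = F ((s+m) mod n)%nat (comp_from F n s m x).
Proof.
  induction m; intros s x.
  - simpl. rewrite Nat.add_0_r. reflexivity.
  - change (comp_from F n s (S (S m)) x) with (comp_from F n (S s) (S m) (F (s mod n)%nat x)).
    rewrite IHm. simpl. f_equal. f_equal. lia.
Qed.

Lemma comp_nonneg m : forall s x, 0 <= x -> 0 <= comp_from F n s m x.
Proof.
  induction m; intros s x Hx; simpl; auto.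
  apply IHm. left. apply Fpos; auto. apply modlt.
Qed.

Lemma comp_mono m : forall s x y, 0 <= x -> x <= y ->
  (Nat.even m = true -> comp_from F n s m x <= comp_from F n s m y) /\
  (Nat.even m = false -> comp_from F n s m y <= comp_from F n s m x).
Proof.
  induction m; intros s x y Hx Hxy.
  - simpl. split; intro H; [lra | discriminate].
  - change (comp_from F n s (S m) x) with (comp_from F n (S s) m (F (s mod n)%nat x)).
    change (comp_from F n s (S m) y) with (comp_from F n (S s) m (F (s mod n)%nat y)).
    pose proof (Fanti _ (modlt s) x y Hx Hxy).
    pose proof (Fpos _ (modlt s) x Hx).
    pose proof (Fpos _ (modlt s) y ltac:(lra)).
    destruct (IHm (S s) _ _ (Rlt_le _ _ H1) H) as [I1 I2].
    rewrite Nat.even_succ, <- Nat.negb_even.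
    destruct (Nat.even m); simpl; split; intro E; try discriminate; auto.
Qed.

Lemma tarski (G : R -> R) (M : R) : 0 <= M ->
  (forall x, 0 <= x -> 0 <= G x <= M) ->
  (forall x y, 0 <= x -> x <= y -> G x <= G y) ->
  exists c, 0 <= c /\ G c = c.
Proof.
  intros HM HG Hm.
  set (E := fun x => 0 <= x <= M /\ x <= G x).
  destruct (completeness E) as [c [Hub Hlub]].
  { exists M. intros x [Hx _]. lra. }
  { exists 0. unfold E. pose proof (HG 0 ltac:(lra)). lra. }
  assert (E0 : E 0) by (unfold E; pose proof (HG 0 ltac:(lra)); lra).
  assert (c0 : 0 <= c) by (apply Hub; auto).
  assert (c1 : G c >= c).
  { apply Rle_ge. apply Hlub. intros x [Hx Hx2].
    eapply Rle_trans; [exact Hx2|]. apply Hm; [lra|]. apply Hub. split; auto. }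
  assert (c2 : E (G c)).
  { split. apply HG; auto. apply Hm; auto. lra. }
  pose proof (Hub _ c2). exists c. split; auto. lra.
Qed.

Lemma cyc_fix s : Nat.Even n -> exists x, 0 < x /\ x = comp_from F n s n x.
Proof.
  intro Hev. assert (Ex : exists n', n = S n') by (exists (pred n); lia). destruct Ex as [n' En].
  assert (CL : forall x, comp_from F n s n x = F ((s+n') mod n)%nat (comp_from F n s n' x)).
  { intro x. pose proof (comp_last n' s x) as H. rewrite <- En in H. exact H. }
  assert (Hlt : ((s + n') mod n < n)%nat) by apply modlt.
  destruct (tarski (comp_from F n s n) (F ((s+n') mod n)%nat 0)) as [c [c0 Hc]].
  - left. apply Fpos; auto; lra.
  - intros x Hx. rewrite CL. split.
    + left. apply Fpos; auto. apply comp_nonneg; auto.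
    + apply Fanti; auto; [lra|]. apply comp_nonneg; auto.
  - intros x y Hx Hxy. apply (comp_mono n s x y Hx Hxy).
    apply Nat.even_spec. exact Hev.
  - exists c. split; [|auto].
    rewrite <- Hc, CL. apply Fpos; auto. apply comp_nonneg; auto.
Qed.

Fixpoint Q (x : R) (m : nat) : R :=
  match m with O => x | S m' => F (m' mod n)%nat (Q x m') end.

Lemma comp_Q x m : forall s, comp_from F n s m (Q x s) = Q x (s + m).
Proof.
  induction m; intro s; simpl.
  - f_equal; lia.
  - change (F (s mod n)%nat (Q x s)) with (Q x (S s)). rewrite IHm. f_equal; lia.
Qed.

Lemma Q_nonneg x m : 0 <= x -> 0 <= Q x m.
Proof.
  intro Hx. pose proof (comp_Q x m 0) as H. simpl in H. rewrite <- H.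
  apply comp_nonneg; auto.
Qed.

Lemma Q_period x : comp_from F n 0 n x = x -> forall m, Q x (m + n) = Q x m.
Proof.
  intros Hx m. induction m.
  - simpl. pose proof (comp_Q x n 0) as H. simpl in H. rewrite <- H. exact Hx.
  - replace (S m + n)%nat with (S (m + n)) by lia. simpl. rewrite IHm. f_equal.
    replace (m + n)%nat with (m + 1 * n)%nat by lia. apply Nat.Div0.mod_add.
Qed.

Lemma Q_periodq x : comp_from F n 0 n x = x -> forall q m, Q x (m + q * n) = Q x m.
Proof.
  intros Hx q. induction q; intro m.
  - f_equal; lia.
  - replace (m + S q * n)%nat with ((m + q * n) + n)%nat by lia.
    rewrite Q_period; auto.
Qed.

Lemma Q_mod x : comp_from F n 0 n x = x -> forall m, Q x m = Q x (m mod n).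
Proof.
  intros Hx m. rewrite <- (Q_periodq x Hx (m / n) (m mod n)). f_equal.
  pose proof (Nat.div_mod m n ltac:(lia)). lia.
Qed.
End Comb.

Theorem proposition3 (n : nat) (a dr dp k : nat -> R -> R) :
  (2 <= n)%nat -> Nat.Even n ->
  standing n a dr dp k ->
  (forall i, (i < n)%nat ->
     exists alpha : R, is_lim (a i) p_infty alpha /\ 0 < alpha) ->
  (forall i, (i < n)%nat ->
     exists deltaR : Rbar, is_lim (dr i) p_infty deltaR /\
       Rbar_lt (a i 0) deltaR) ->
  (forall i, (i < n)%nat ->
     exists deltaP : Rbar, is_lim (dp i) p_infty deltaP /\
       Rbar_lt (k i (inv_nonneg (dr i) (a i 0))) deltaP) ->
  (forall i, (i < n)%nat ->
     exists x : R, 0 < x /\ x = cyc_map (fmap a dr dp k) n i x) /\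
  (exists pstar : nat -> R,
     (forall i, (i < n)%nat ->
        0 < pstar i /\ pstar i = cyc_map (fmap a dr dp k) n i (pstar i)) /\
     steady_state n a dr dp k
       (fun i => inv_nonneg (dr i) (a i (pstar (prev n i)))) pstar).
Proof.
  intros Hn Hev Hst _ HdR HdP.
  assert (npos : (0 < n)%nat) by lia.
  set (F := fmap a dr dp k).
  assert (FP : forall i, (i < n)%nat ->
    (forall x, 0 <= x -> exists y, 0 <= y /\ dr i y = a i x) /\
    (forall x, 0 <= x -> exists y, 0 <= y /\ dp i y = k i (inv_nonneg (dr i) (a i x))) /\
    (forall x, 0 <= x -> 0 < F i x) /\
    (forall x y, 0 <= x -> x <= y -> F i y <= F i x)).
  { intros i Hi. unfold F, fmap.
    destruct (Hst i Hi) as [[_ [Ann [Ad _]]] [HDr [HDp HK]]].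
    destruct (HdR i Hi) as [dR [HlR HltR]].
    destruct (HdP i Hi) as [dP [HlP HltP]].
    apply F_props; auto; eapply lim_above; eauto. }
  assert (Fpos : forall i, (i < n)%nat -> forall x, 0 <= x -> 0 < F i x)
    by (intros i Hi; apply (FP i Hi)).
  assert (Fanti : forall i, (i < n)%nat -> forall x y, 0 <= x -> x <= y -> F i y <= F i x)
    by (intros i Hi; apply (FP i Hi)).
  split.
  - intros i Hi. destruct (cyc_fix F n npos Fpos Fanti (S i) Hev) as [x [x0 Hx]].
    exists x. unfold cyc_map. auto.
  - destruct (cyc_fix F n npos Fpos Fanti 0 Hev) as [x [x0 Hx]].
    assert (Hx' : comp_from F n 0 n x = x) by auto.
    exists (fun i => Q F n x (S i)).
    assert (key : forall i, (i < n)%nat -> Q F n x (S (prev n i)) = Q F n x i).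
    { intros i Hi. rewrite (Q_mod F n npos x Hx' (S (prev n i))), (Q_mod F n npos x Hx' i).
      f_equal. unfold prev. replace (S ((i + n - 1) mod n)) with ((i + n - 1) mod n + 1)%nat by lia.
      rewrite Nat.Div0.add_mod_idemp_l.
      replace (i + n - 1 + 1)%nat with (i + 1 * n)%nat by lia.
      apply Nat.Div0.mod_add. }
    assert (QS : forall i, (i < n)%nat -> Q F n x (S i) = F i (Q F n x i)).
    { intros i Hi. simpl. rewrite Nat.mod_small; auto. }
    assert (Qn : forall m, 0 <= Q F n x m) by (intro m; apply Q_nonneg; auto; lra).
    split.
    { intros i Hi. split.
      { rewrite (QS i Hi). apply Fpos; auto. }
      { unfold cyc_map. rewrite comp_Q. rewrite (Q_period F n npos x Hx' (S i)). reflexivity. exact npos. } }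
    { unfold steady_state. intros i Hi. cbv beta. rewrite key by auto. rewrite QS by auto.
      destruct (FP i Hi) as [E1 [E2 _]].
      destruct (inv_spec _ _ (E1 _ (Qn i))) as [_ H1].
      destruct (inv_spec _ _ (E2 _ (Qn i))) as [_ H2].
      unfold F, fmap. unfold F, fmap in H1, H2. split; lra. }
Qed.
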